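(* In the setting described in the context, with $\mathbf{C}\in\mathbb{R}^{n\times n}$ defined entrywise by $$[\mathbf C]_{ij}=\begin{cases}\frac{1}{2n_{s(i)}}\Big(\frac{a_i}{w_i}-\frac{1-a_i}{1-w_i}\Big)&\text{if }j=i,\\[4pt] \frac{1}{2n_{s(i)}}\Big[\Big(1-\frac{a_i}{w_i}\Big)[\boldsymbol\beta_1^{r(i)}(x_i)]_j+\Big(\frac{1-a_i}{1-w_i}-1\Big)[\boldsymbol\beta_0^{r(i)}(x_i)]_j\Big]&\text{if }j\ne i,\end{cases}$$ the MMD test statistic satisfies $T_n^{\mathrm{MMD}}:=n\|\bar\psi_n\|_{\mathcal{H}}^2=n\langle\mathbf C,\mathbf K\mathbf C\mathbf L\rangle_F$.
   Context: Let $k,\ell$ be kernels on $\mathcal{X},\mathcal{Y}$ with feature maps $K_x,L_y$, and $\mathcal{H}=\mathcal{H}_\mathcal{X}\otimes\mathcal{H}_\mathcal{Y}$ the tensor-product RKHS with kernel $k(x,x')\ell(y,y')$ and feature map $\Lambda_{x,y}=K_x\otimes L_y$. Data $z_i=(x_i,a_i,y_i)\in\mathcal{X}\times\{0,1\}\times\mathcal{Y}$, $i\in[n]$. $[n]$ is partitioned into folds $\mathcal{I}^1,\mathcal{I}^2$ of sizes $n_1,n_2$; for index $i$, $s(i)$ is the fold containing $i$ and $r(i)=3-s(i)$. For each $r\in\{1,2\}$ (fitted on fold $r$) there are propensity estimates $\pi_n^r:\mathcal{X}\to(0,1)$ and outcome models $\theta^r_{n,a}(x)=\sum_{j=1}^n[\boldsymbol\beta_a^r(x)]_j\Lambda_{x,y_j}$,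 $a\in\{0,1\}$, with coefficient vectors $\boldsymbol\beta^r_a(x)\in\mathbb{R}^n$ satisfying $[\boldsymbol\beta^r_a(x)]_j=0$ whenever $j\notin\mathcal{I}^r$ or $a_j\neq a$. Write $w_i=\pi_n^{r(i)}(x_i)$. The cross-fitted one-step estimator is $\bar\psi_n=\frac12\sum_{r=1}^2\frac1{n_s}\sum_{i\in\mathcal{I}^s}\Big[\Big(\frac{a_i}{\pi^r_n(x_i)}-\frac{1-a_i}{1-\pi^r_n(x_i)}\Big)\big(\Lambda_{x_i,y_i}-\theta^r_{n,a_i}(x_i)\big)+\theta^r_{n,1}(x_i)-\theta^r_{n,0}(x_i)\Big]$ with $s=3-r$ (this equals $\frac12\sum_r(\psi^r_n+\mathbb{E}_{P_n^s}\phi_n^r)$ for the efficient influence function $\phi^r_n$, since the plug-in terms cancel). $\mathbf K,\mathbf L\in\mathbb{R}^{n\times n}$ are Gram matrices $[\mathbf K]_{ij}=k(x_i,x_j)$, $[\mathbf L]_{ij}=\ell(y_i,y_j)$, and $\langle\mathbf A,\mathbf B\rangle_F=\mathrm{tr}(\mathbf A^\top\mathbf B)$. *)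

(* Defs.v *)
From HB Require Import structures.
From mathcomp Require Import all_boot all_order all_algebra.
Set Implicit Arguments. Unset Strict Implicit. Unset Printing Implicit Defensive.
Import Order.TTheory GRing.Theory Num.Theory.
Local Open Scope ring_scope.

Definition inner_product (R : realFieldType) (V : lmodType R)
  (ip : V -> V -> R) : Prop :=
  [/\ (forall u v, ip u v = ip v u),
      (forall (c : R) u v w, ip (c *: u + v) w = c * ip u w + ip v w),
      (forall u, 0 <= ip u u) &
      (forall u, ip u u = 0 -> u = 0)].

Definition ind (R : realFieldType) (b : bool) : R := (b : nat)%:R.

(* Size n_f of fold f (folds are indexed by bool: false ~ fold 1, true ~ fold 2). *)
Definition nfold (n : nat) (fold : 'I_n -> bool) (f : bool) : nat :=
  #|[set i : 'I_n | fold i == f]|.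

Definition theta (R : realFieldType) (V : lmodType R) (X Y : Type) (n : nat)
  (Lam : X -> Y -> V) (y : 'I_n -> Y)
  (beta : bool -> bool -> X -> 'I_n -> R) (r a : bool) (x : X) : V :=
  \sum_(j < n) beta r a x j *: Lam x (y j).

(* Cross-fitted one-step estimator psi_bar_n; model fold r, evaluation fold s = ~~ r. *)
Definition psi_bar (R : realFieldType) (V : lmodType R) (X Y : Type) (n : nat)
  (Lam : X -> Y -> V) (x : 'I_n -> X) (a : 'I_n -> bool) (y : 'I_n -> Y)
  (fold : 'I_n -> bool) (pi : bool -> X -> R)
  (beta : bool -> bool -> X -> 'I_n -> R) : V :=
  2^-1 *: \sum_(r : bool)
    ((nfold fold (~~ r))%:R^-1 *:
      \sum_(i < n | fold i == ~~ r)
        ((ind R (a i) / pi r (x i) - (1 - ind R (a i)) / (1 - pi r (x i))) *: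
           (Lam (x i) (y i) - theta Lam y beta r (a i) (x i))
         + theta Lam y beta r true (x i) - theta Lam y beta r false (x i))).

(* The matrix C of the proposition; s(i) = fold i, r(i) = ~~ fold i,
   w_i = pi^{r(i)}(x_i). *)
Definition Cmat (R : realFieldType) (X : Type) (n : nat)
  (x : 'I_n -> X) (a : 'I_n -> bool) (fold : 'I_n -> bool)
  (pi : bool -> X -> R) (beta : bool -> bool -> X -> 'I_n -> R) : 'M[R]_n :=
  \matrix_(i, j)
    (let w := pi (~~ fold i) (x i) in
     let ai := ind R (a i) in
     let c := (2 * (nfold fold (fold i))%:R)^-1 in
     if j == i then c * (ai / w - (1 - ai) / (1 - w))
     else c * ((1 - ai / w) * beta (~~ fold i) true (x i) j
               + ((1 - ai) / (1 - w) - 1) * beta (~~ fold i) false (x i) j)).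

Definition gram (R : realFieldType) (Z : Type) (n : nat) (k : Z -> Z -> R)
  (z : 'I_n -> Z) : 'M[R]_n := \matrix_(i, j) k (z i) (z j).

Definition frob (R : realFieldType) (n : nat) (A B : 'M[R]_n) : R :=
  \tr (A^T *m B).

(* Main.v *)
Require Import Defs.
From HB Require Import structures.
From mathcomp Require Import all_boot all_order all_algebra ring.
Import Order.TTheory GRing.Theory Num.Theory.
Local Open Scope ring_scope.

Section IP.
Variables (R : realFieldType) (V : lmodType R) (ip : V -> V -> R).
Hypothesis ok : inner_product ip.

Lemma ip0l w : ip 0 w = 0.
Proof. case: ok => _ hl _ _. have := hl 1 0 0 w. rewrite scale1r addr0 mul1r => h.
by apply: (@addrI _ (ip 0 w)); rewrite addr0 -h. Qed.

Lemma ipDl u v w : ip (u + v) w = ip u w + ip v w.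
Proof. case: ok => _ hl _ _. by rewrite -{1}[u]scale1r hl mul1r. Qed.

Lemma ipZl c u w : ip (c *: u) w = c * ip u w.
Proof. case: ok => _ hl _ _. by rewrite -[c *: u]addr0 hl ip0l addr0. Qed.

Lemma ipsuml (I : Type) (r : seq I) (P : pred I) F w :
  ip (\sum_(i <- r | P i) F i) w = \sum_(i <- r | P i) ip (F i) w.
Proof. elim/big_rec2: _ => [|i s t _ <-]; [exact: ip0l | exact: ipDl]. Qed.

Lemma ipsumr (I : Type) (r : seq I) (P : pred I) F w :
  ip w (\sum_(i <- r | P i) F i) = \sum_(i <- r | P i) ip w (F i).
Proof. case: ok => hs _ _ _. rewrite hs ipsuml. by apply: eq_bigr => i _; rewrite hs. Qed.

Lemma ipZr c u w : ip w (c *: u) = c * ip w u.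
Proof. case: ok => hs _ _ _. by rewrite hs ipZl hs. Qed.
End IP.

Lemma comb (R : realFieldType) (V : lmodType R) n (v : 'I_n -> V) i c d
  (b b1 b0 : 'I_n -> R) :
  c *: (d *: (v i - \sum_j b j *: v j) + \sum_j b1 j *: v j - \sum_j b0 j *: v j)
  = \sum_j (c * (d * ((j == i)%:R - b j) + b1 j - b0 j)) *: v j.
Proof.
have -> : v i = \sum_j (j == i)%:R *: v j.
  rewrite (bigD1 i) //= eqxx scale1r big1 ?addr0 // => j /negbTE ->.
  by rewrite scale0r.
rewrite -sumrB scaler_sumr -big_split -sumrB scaler_sumr.
apply: eq_bigr => j _.
by rewrite -scalerBl scalerA /= -scalerDl -scalerBl scalerA.
Qed.

Lemma psi_expand (R : realFieldType) (X Y : Type) (H : lmodType R) (Lam : X -> Y -> H)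
  (n : nat) (x : 'I_n -> X) (a : 'I_n -> bool) (y : 'I_n -> Y)
  (fold : 'I_n -> bool) (pi : bool -> X -> R)
  (beta : bool -> bool -> X -> 'I_n -> R)
  (hbeta : forall r a0 x0 j, (fold j != r) || (a j != a0) -> beta r a0 x0 j = 0) :
  psi_bar Lam x a y fold pi beta =
  \sum_i \sum_j Cmat x a fold pi beta i j *: Lam (x i) (y j).
Proof.
rewrite /psi_bar scaler_sumr.
under eq_bigr => r _ do rewrite scalerA scaler_sumr big_mkcond.
rewrite exchange_big /=; apply: eq_bigr => i _.
rewrite big_bool /= /theta.
under [RHS]eq_bigr => j _ do rewrite mxE /=.
have hb : forall a0 x0, beta (~~ fold i) a0 x0 i = 0.
  by move=> a0 x0; apply: hbeta; case: (fold i).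
case hf: (fold i) hb => /= hb; rewrite ?addr0 ?add0r comb;
  apply: eq_bigr => j _; congr (_ *: _); case: eqP => [->|ji]; rewrite ?hb ?invfM;
  case: (a i); rewrite /ind /=; ring.
Qed.

Theorem proposition3p5 (R : realFieldType) (X Y : Type)
  (HX HY H : lmodType R)
  (ipX : HX -> HX -> R) (ipY : HY -> HY -> R) (ip : H -> H -> R)
  (ipX_ok : inner_product ipX) (ipY_ok : inner_product ipY)
  (ip_ok : inner_product ip)
  (k : X -> X -> R) (l : Y -> Y -> R)
  (Kf : X -> HX) (Lf : Y -> HY) (Lam : X -> Y -> H)
  (hk : forall x x', k x x' = ipX (Kf x) (Kf x'))
  (hl : forall y y', l y y' = ipY (Lf y) (Lf y'))
  (hLam : forall x y x' y', ip (Lam x y) (Lam x' y') = k x x' * l y y')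
  (n : nat) (x : 'I_n -> X) (a : 'I_n -> bool) (y : 'I_n -> Y)
  (fold : 'I_n -> bool)
  (pi : bool -> X -> R) (hpi : forall r x0, 0 < pi r x0 < 1)
  (beta : bool -> bool -> X -> 'I_n -> R)
  (hbeta : forall r a0 x0 j, (fold j != r) || (a j != a0) -> beta r a0 x0 j = 0) :
  let psi := psi_bar Lam x a y fold pi beta in
  let C := Cmat x a fold pi beta in
  n%:R * ip psi psi = n%:R * frob C (gram k x *m C *m gram l y).
Proof.
move=> psi C; congr (_ * _).
have lsym : forall u v, l u v = l v u.
  by move=> u v; rewrite !hl; case: ipY_ok => hs _ _ _; rewrite hs.
rewrite /psi psi_expand // -/C ipsuml //.
under eq_bigr => i _ do rewrite ipsuml //.
under eq_bigr => i _ do under eq_bigr => j _ do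
  rewrite ipZl // ipsumr //.
under eq_bigr => i _ do under eq_bigr => j _ do
  under eq_bigr => i' _ do rewrite ipsumr //.
under eq_bigr => i _ do under eq_bigr => j _ do
  under eq_bigr => i' _ do under eq_bigr => j' _ do rewrite ipZr // hLam.
rewrite /frob /mxtrace exchange_big /=; apply: eq_bigr => i _.
rewrite mxE; apply: eq_bigr => i0 _.
rewrite !mxE; congr (_ * _).
rewrite exchange_big /=; apply: eq_bigr => j' _.
rewrite !mxE mulr_suml; apply: eq_bigr => i' _.
rewrite !mxE lsym; ring.
Qed.
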